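(* Let $m\ge1$, let $C\in\mathbb{R}^{m\times 3}$, and let $A,B^t\in\mathcal{Q}_0(C)$ (so $A\in\mathbb{R}^{m\times3}$, $B\in\mathbb{R}^{3\times m}$). Suppose the DSR graph $G_{A,B}$ satisfies: (i) every e-cycle of length $4$ is an s-cycle; and (ii) every o-cycle of length $6$ is an s-cycle. Then no nonreal eigenvalue of $AB$ lies in the open left half-plane $\mathbb{C}_-$.
   Context: For $M\in\mathbb{R}^{n\times m}$, $\mathcal{Q}(M)$ is the set of matrices with the same sign pattern as $M$ (entrywise signs in $\{-,0,+\}$ equal), and $\mathcal{Q}_0(M)$ is its closure. DSR graphs: for $A\in\mathbb{R}^{n\times m}$, $B\in\mathbb{R}^{m\times n}$, $G_{A,B}$ is the signed, labelled bipartite digraph with S-vertices $S_1,\dots,S_n$ and R-vertices $R_1,\dots,R_m$, having an arc $R_j\to S_i$ of sign $\mathrm{sign}(A_{ij})$ iff $A_{ij}\ne0$, and an arc $S_i\to R_j$ of sign $\mathrm{sign}(B_{ji})$ iff $B_{ji}\neq 0$. A pair of antiparallel arcs between $S_i$ and $R_j$ with the same sign is regarded as a single undirected edge (traversable in either direction). An edge arising from $A_{ij}\ne0$ (R-to-S or undirected) has label $|A_{ij}|$; an edge with only S-to-R orientation has label $\infty$. Walks traverse edges consistently with their orientation; the length of a walk is its number of edges (with multiplicity), its sign is the product of its edge signs. A cycle is a nonempty closed walk repeating no vertex except first$=$last. The parity of a cycle $W$ (of even length) is $P(W)=(-1)^{|W|/2}\mathrm{sign}(W)$; it is an e-cycle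 if $P=1$ and an o-cycle if $P=-1$. A cycle $(e_1,\dots,e_{2r})$ is an s-cycle if all its labels are finite and $\prod_{i=1}^r l(e_{2i-1})=\prod_{i=1}^r l(e_{2i})$. *)

(* Defs.v *)
From HB Require Import structures.
From mathcomp Require Import all_boot all_order all_algebra.
From mathcomp Require Import reals.
From mathcomp Require Export complex.

Set Implicit Arguments.
Unset Strict Implicit.
Unset Printing Implicit Defensive.

Import Order.TTheory GRing.Theory Num.Theory.
Local Open Scope ring_scope.

Definition in_Q0 (R : realDomainType) (n p : nat) (M M' : 'M[R]_(n, p)) : Prop :=
  forall i j, M' i j = 0 \/ Num.sg (M' i j) = Num.sg (M i j).

(* A : 'M_(n, k), B : 'M_(k, n).  S-vertices S_1..S_n are [inl i],
   R-vertices R_1..R_k are [inr j]. *)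
Definition dsr_vertex (n k : nat) := ('I_n + 'I_k)%type.

(* Edge data: sign (in {-1,1}) and label; label [None] means infinity. *)
Record dsr_edge (R : Type) := DsrEdge { e_sign : R; e_label : option R }.

(* The (unique, if any) edge of G_{A,B} that can be traversed from u to v.
   - R_j -> S_i exists iff A_ij <> 0; it is either an R-to-S arc or the
     undirected edge (if also B_ji has the same sign); in both cases its
     sign is sign(A_ij) and its label |A_ij|.
   - S_i -> R_j exists iff B_ji <> 0; if A_ij <> 0 with the same sign it is
     the undirected edge (label |A_ij|), otherwise it is an S-to-R-only arc
     of sign sign(B_ji) and label infinity. *)
Definition dsr_step (R : realDomainType) (n k : nat)
    (A : 'M[R]_(n, k)) (B : 'M[R]_(k, n)) (u v : dsr_vertex n k)
    : option (dsr_edge R) :=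
  match u, v with
  | inr j, inl i =>
      if A i j != 0 then Some (DsrEdge (Num.sg (A i j)) (Some `|A i j|))
      else None
  | inl i, inr j =>
      if B j i != 0 then
        if (A i j != 0) && (Num.sg (A i j) == Num.sg (B j i))
        then Some (DsrEdge (Num.sg (B j i)) (Some `|A i j|))
        else Some (DsrEdge (Num.sg (B j i)) None)
      else None
  | _, _ => None
  end.

(* Its edges are
   e_1, ..., e_L, where e_{t+1} is the edge from c t to c (t+1 mod L),
   t : 'I_L.  (Every cycle in the sense of the paper arises this way, and
   the notions below are invariant under the choice of starting vertex.) *)
Definition dsr_cycle (R : realDomainType) (n k : nat)
    (A : 'M[R]_(n, k)) (B : 'M[R]_(k, n)) (L : nat)
    (c : 'I_L -> dsr_vertex n k) : Prop :=
  [/\ (0 < L)%N, injective c & forall t : 'I_L, dsr_step A B (c t) (c (ordS t)) <> None].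

Definition cyc_edge (R : realDomainType) (n k : nat)
    (A : 'M[R]_(n, k)) (B : 'M[R]_(k, n)) (L : nat)
    (c : 'I_L -> dsr_vertex n k) (t : 'I_L) : option (dsr_edge R) :=
  dsr_step A B (c t) (c (ordS t)).

Definition opt_sign (R : realDomainType) (o : option (dsr_edge R)) : R :=
  if o is Some e then e_sign e else 1.

Definition cyc_sign (R : realDomainType) (n k : nat)
    (A : 'M[R]_(n, k)) (B : 'M[R]_(k, n)) (L : nat)
    (c : 'I_L -> dsr_vertex n k) : R :=
  \prod_(t < L) opt_sign (cyc_edge A B c t).

Definition cyc_parity (R : realDomainType) (n k : nat)
    (A : 'M[R]_(n, k)) (B : 'M[R]_(k, n)) (L : nat)
    (c : 'I_L -> dsr_vertex n k) : R :=
  (-1) ^+ (L./2) * cyc_sign A B c.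

Definition e_cycle (R : realDomainType) (n k : nat)
    (A : 'M[R]_(n, k)) (B : 'M[R]_(k, n)) (L : nat)
    (c : 'I_L -> dsr_vertex n k) : Prop :=
  dsr_cycle A B c /\ cyc_parity A B c = 1.

Definition o_cycle (R : realDomainType) (n k : nat)
    (A : 'M[R]_(n, k)) (B : 'M[R]_(k, n)) (L : nat)
    (c : 'I_L -> dsr_vertex n k) : Prop :=
  dsr_cycle A B c /\ cyc_parity A B c = -1.

(* finite label of an edge (None = infinite label or no edge) *)
Definition opt_label (R : realDomainType) (o : option (dsr_edge R)) : option R :=
  if o is Some e then e_label e else None.

(* s-cycle: all labels finite and l(e_1) l(e_3) ... = l(e_2) l(e_4) ...;
   with 0-based t, e_{t+1} is odd-numbered iff t is even. *)
Definition s_cycle (R : realDomainType) (n k : nat)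
    (A : 'M[R]_(n, k)) (B : 'M[R]_(k, n)) (L : nat)
    (c : 'I_L -> dsr_vertex n k) : Prop :=
  dsr_cycle A B c /\
  exists l : 'I_L -> R,
    (forall t, opt_label (cyc_edge A B c t) = Some (l t)) /\
    \prod_(t < L | ~~ odd t) l t = \prod_(t < L | odd t) l t.

(* Main.v *)
Require Import Defs.
From HB Require Import structures.
From mathcomp Require Import all_boot all_order all_algebra.
From mathcomp Require Import reals complex.
From mathcomp Require Import ring lra.

Import Order.TTheory GRing.Theory Num.Theory.
Set Implicit Arguments.
Unset Strict Implicit.
Unset Printing Implicit Defensive.
Local Open Scope ring_scope.

Definition o0 : 'I_3 := @Ordinal 3 0 isT.
Definition o1 : 'I_3 := @Ordinal 3 1 isT.
Definition o2 : 'I_3 := @Ordinal 3 2 isT.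

Ltac fixo t := lazymatch t with o0 => idtac | o1 => idtac | o2 => idtac | _ =>
  let v := eval compute in (nat_of_ord t) in
  lazymatch v with
  | 0%N => rewrite (_ : t = o0); [|by apply: val_inj]
  | 1%N => rewrite (_ : t = o1); [|by apply: val_inj]
  | 2%N => rewrite (_ : t = o2); [|by apply: val_inj] end end.
Ltac normM M := repeat match goal with |- context [@fun_of_matrix _ _ _ M ?i ?j] => progress (fixo i; fixo j) end.

Lemma det33 (R : comNzRingType) (M : 'M[R]_3) :
  \det M = M o0 o0 * (M o1 o1 * M o2 o2 - M o1 o2 * M o2 o1)
         - M o0 o1 * (M o1 o0 * M o2 o2 - M o1 o2 * M o2 o0)
         + M o0 o2 * (M o1 o0 * M o2 o1 - M o1 o1 * M o2 o0).
Proof.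
rewrite (expand_det_row _ ord0) !big_ord_recl big_ord0 /cofactor.
rewrite !(expand_det_row _ ord0) !big_ord_recl !big_ord0 /cofactor.
rewrite !(expand_det_row _ ord0) !big_ord_recl !big_ord0 /cofactor.
rewrite !det_mx00 !mxE /=.
normM M. rewrite /bump /=. ring.
Qed.
Lemma cubic_re (R : rcfType) (a1 a2 a3 : R) (z : R[i]) :
  z^+3 - (a1%:C)%C * z^+2 + (a2%:C)%C * z - (a3%:C)%C = 0 -> complex.Im z != 0 ->
  0 <= a1 * a2 - a3 -> 0 <= complex.Re z.
Proof.
case: z => p q /= h hq hD.
have : (p +i* q)%C ^+ 3 - (a1%:C)%C * (p +i* q)%C ^+ 2 + (a2%:C)%C * (p +i* q)%C - (a3%:C)%C
   = ((p^+3 - 3 * p * q^+2 - a1 * (p^+2-q^+2) + a2 * p - a3) +i* (q * (3 * p^+2 - q^+2 - 2 * a1 * p + a2)))%C.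
  rewrite !exprS expr0 !mulr1; simpc; apply/eqP; rewrite eq_complex /=; apply/andP; split; apply/eqP; ring.
rewrite h => /eqP; rewrite eq_complex /= => /andP[/eqP h1 /eqP h2].
move: h2 => /eqP; rewrite eq_sym mulf_eq0 (negbTE hq) /= => /eqP hE.
have key : a1 * a2 - a3 = 2 * p * ((p - a1)^+2 + q^+2) + (a1 - p) * (3 * p^+2 - q^+2 - 2 * a1 * p + a2).
  move/eqP: h1; rewrite eq_sym subr_eq0 => /eqP <-; ring.
rewrite hE mulr0 addr0 in key.
have hq2 : 0 < q^+2 by rewrite lt_def sqrf_eq0 hq sqr_ge0.
rewrite leNgt; apply/negP => hp.
have : 0 < (p - a1)^+2 + q^+2 by apply: ltr_wpDl => //; exact: sqr_ge0.
move=> hpos.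
have : 2 * p * ((p - a1)^+2 + q^+2) < 0 by rewrite pmulr_llt0 // pmulr_rlt0 // ltr0n.
lra.
Qed.
Lemma eig_swap (F : fieldType) (m k : nat) (A : 'M[F]_(m, k)) (B : 'M[F]_(k, m)) (l : F) :
  eigenvalue (A *m B) l -> l != 0 -> \det (B *m A - l%:M) = 0.
Proof.
move=> /eigenvalueP [v hv v0] l0.
apply/eqP/det0P; exists (v *m A).
  apply/eqP => w0; move/eqP: v0; apply.
  have : l *: v = 0 by rewrite -hv mulmxA w0 mul0mx.
  by move/eqP; rewrite scaler_eq0 (negbTE l0) /= => /eqP.
by rewrite mulmxBr mulmxA -(mulmxA v) hv -scalemxAl mul_mx_scalar subrr.
Qed.
Definition xx (R : comNzRingType) m (A : 'M[R]_(m,3)) (B : 'M[R]_(3,m)) i c := A i c * B c i.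

Lemma sg_ge0 (R : realDomainType) (a b : R) : Num.sg a = Num.sg b -> 0 <= a * b.
Proof. by move=> E; rewrite -sgr_ge0 sgrM E -expr2 sqr_ge0. Qed.

Lemma xpos (R : realDomainType) m (C A : 'M[R]_(m,3)) (B : 'M[R]_(3,m)) :
  in_Q0 C A -> in_Q0 C B^T -> forall i c, 0 <= xx A B i c.
Proof.
move=> HA HB i c; rewrite /xx.
case: (HA i c) => [->|EA]; first by rewrite mul0r.
have := HB i c; rewrite mxE => -[->|EB]; first by rewrite mulr0.
by apply: sg_ge0; rewrite EA EB.
Qed.

Lemma xabs (R : realDomainType) m (C A : 'M[R]_(m,3)) (B : 'M[R]_(3,m)) :
  in_Q0 C A -> in_Q0 C B^T -> forall i c, xx A B i c = `|A i c| * `|B c i|.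
Proof. by move=> HA HB i c; rewrite -normrM ger0_norm //; apply: (xpos HA HB). Qed.

Definition cyc4 m (p q : 'I_m) (u v : 'I_3) : 'I_4 -> dsr_vertex m 3 :=
  fun t => match val t with 0 => inr u | 1 => inl p | 2 => inr v | _ => inl q end.

Lemma cyc4_inj m (p q : 'I_m) (u v : 'I_3) : p != q -> u != v -> injective (cyc4 p q u v).
Proof.
move=> pq uv [[|[|[|[|t1]]]] h1] [[|[|[|[|t2]]]] h2] //= E; try (by apply: val_inj);
  try (by case: E); try (by move: E => [] E; rewrite E eqxx in pq uv).
Qed.

Lemma prod4 (R : comNzRingType) (F : 'I_4 -> R) :
  \prod_(t < 4) F t = F (@Ordinal 4 0 isT) * F (@Ordinal 4 1 isT) * F (@Ordinal 4 2 isT) * F (@Ordinal 4 3 isT).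
Proof.
rewrite !big_ord_recl big_ord0 mulr1 !mulrA.
by congr (F _ * F _ * F _ * F _); apply: val_inj.
Qed.

Lemma L4 (R : realType) m (C A : 'M[R]_(m,3)) (B : 'M[R]_(3,m)) :
  in_Q0 C A -> in_Q0 C B^T ->
  (forall c : 'I_4 -> dsr_vertex m 3, e_cycle A B c -> s_cycle A B c) ->
  forall p q u v, u != v ->
  A p u * A q v * B v p * B u q <= xx A B p v * xx A B q u.
Proof.
move=> HA HB H4 p q u v uv; have vu : v != u by rewrite eq_sym.
have X0 := xpos HA HB.
case: (eqVneq p q) => [<-|pq].
  by rewrite /xx le_eqVlt; apply/orP; left; apply/eqP; ring.
case: (leP (A p u * A q v * B v p * B u q) 0) => [hle|hpos].
  by apply: le_trans hle _; apply: mulr_ge0.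
have n1 : A p u != 0 by apply: contraTneq hpos => ->; rewrite !mul0r ltxx.
have n2 : A q v != 0 by apply: contraTneq hpos => ->; rewrite mulr0 !mul0r ltxx.
have n3 : B v p != 0 by apply: contraTneq hpos => ->; rewrite mulr0 !mul0r ltxx.
have n4 : B u q != 0 by apply: contraTneq hpos => ->; rewrite mulr0 ltxx.
have cyc : dsr_cycle A B (cyc4 p q u v).
  split => //; first exact: cyc4_inj.
  by move=> [[|[|[|[|t]]]] ht] //=; rewrite ?n1 ?n2 ?n3 ?n4 //; case: ifP.
have par : cyc_parity A B (cyc4 p q u v) = 1.
  rewrite /cyc_parity /cyc_sign prod4 /cyc_edge /= n1 n2 n3 n4 /=.
  case: ifP => _; case: ifP => _ /=;
  by move: (gtr0_sg hpos); rewrite !sgrM => E; rewrite -[RHS]E; ring.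

have [_ [l [hl heq]]] := H4 _ (conj cyc par).
move: (hl (@Ordinal 4 0 isT)); rewrite /cyc_edge /= n1 => -[] l0.
move: (hl (@Ordinal 4 2 isT)); rewrite /cyc_edge /= n2 => -[] l2.
move: (hl (@Ordinal 4 1 isT)); rewrite /cyc_edge /= n3.
case: ifP => [/andP[a1 _]|] //= [] l1.
move: (hl (@Ordinal 4 3 isT)); rewrite /cyc_edge /= n4.
case: ifP => [/andP[a3 _]|] //= [] l3.
rewrite big_mkcond prod4 /= [RHS]big_mkcond prod4 /= !mulr1 !mul1r -l0 -l1 -l2 -l3 in heq.
rewrite !(xabs HA HB) -[X in X <= _](ger0_norm (ltW hpos)) !normrM.
rewrite le_eqVlt; apply/orP; left; apply/eqP.
transitivity ((`|A p u| * `|A q v|) * (`|B v p| * `|B u q|)); first ring.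
by rewrite heq; ring.
Qed.

Definition cyc6 m (p q r : 'I_m) (u v w : 'I_3) : 'I_6 -> dsr_vertex m 3 :=
  fun t => match val t with 0 => inr u | 1 => inl p | 2 => inr v | 3 => inl q
                        | 4 => inr w | _ => inl r end.

Lemma cyc6_inj m (p q r : 'I_m) (u v w : 'I_3) : p != q -> q != r -> p != r ->
  u != v -> v != w -> u != w -> injective (cyc6 p q r u v w).
Proof.
move=> pq qr pr uv vw uw [[|[|[|[|[|[|t1]]]]]] h1] [[|[|[|[|[|[|t2]]]]]] h2] //= E;
  try (by apply: val_inj); try (by case: E);
  try (by move: E => [] E; rewrite E eqxx in pq qr pr uv vw uw).
Qed.

Lemma prod6 (R : comNzRingType) (F : 'I_6 -> R) :
  \prod_(t < 6) F t = F (@Ordinal 6 0 isT) * F (@Ordinal 6 1 isT) * F (@Ordinal 6 2 isT)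
     * F (@Ordinal 6 3 isT) * F (@Ordinal 6 4 isT) * F (@Ordinal 6 5 isT).
Proof.
rewrite !big_ord_recl big_ord0 mulr1 !mulrA.
by congr (F _ * F _ * F _ * F _ * F _ * F _); apply: val_inj.
Qed.

Definition T6 (R : comNzRingType) m (A : 'M[R]_(m,3)) (B : 'M[R]_(3,m)) p q r u v w :=
  A p u * B v p * A q v * B w q * A r w * B u r.
Definition X6 (R : comNzRingType) m (A : 'M[R]_(m,3)) (B : 'M[R]_(3,m)) p q r u v w :=
  xx A B p v * xx A B q w * xx A B r u.

Lemma L6d (R : realType) m (C A : 'M[R]_(m,3)) (B : 'M[R]_(3,m)) :
  in_Q0 C A -> in_Q0 C B^T ->
  (forall c : 'I_6 -> dsr_vertex m 3, o_cycle A B c -> s_cycle A B c) ->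
  forall p q r u v w, p != q -> q != r -> p != r -> u != v -> v != w -> u != w ->
  T6 A B p q r u v w <= X6 A B p q r u v w.
Proof.
move=> HA HB H6 p q r u v w pq qr pr uv vw uw.
have X0 := xpos HA HB.
rewrite /T6 /X6.
case: (leP (A p u * B v p * A q v * B w q * A r w * B u r) 0) => [hle|hpos].
  by apply: le_trans hle _; apply: mulr_ge0; [apply: mulr_ge0|]; exact: X0.
have n1 : A p u != 0 by apply: contraTneq hpos => ->; rewrite !mul0r ltxx.
have n2 : B v p != 0 by apply: contraTneq hpos => ->; rewrite mulr0 !mul0r ltxx.
have n3 : A q v != 0 by apply: contraTneq hpos => ->; rewrite mulr0 !mul0r ltxx.
have n4 : B w q != 0 by apply: contraTneq hpos => ->; rewrite mulr0 !mul0r ltxx.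
have n5 : A r w != 0 by apply: contraTneq hpos => ->; rewrite mulr0 !mul0r ltxx.
have n6 : B u r != 0 by apply: contraTneq hpos => ->; rewrite mulr0 ltxx.
have cyc : dsr_cycle A B (cyc6 p q r u v w).
  split => //; first exact: cyc6_inj.
  by move=> [[|[|[|[|[|[|t]]]]]] ht] //=; rewrite ?n1 ?n2 ?n3 ?n4 ?n5 ?n6 //; case: ifP.
have par : cyc_parity A B (cyc6 p q r u v w) = -1.
  rewrite /cyc_parity /cyc_sign prod6 /cyc_edge /= n1 n2 n3 n4 n5 n6 /=.
  case: ifP => _; case: ifP => _; case: ifP => _ /=;
  by move: (gtr0_sg hpos); rewrite !sgrM => E; rewrite -[1 in RHS]E; ring.
have [_ [l [hl heq]]] := H6 _ (conj cyc par).
move: (hl (@Ordinal 6 0 isT)); rewrite /cyc_edge /= n1 => -[] l0.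
move: (hl (@Ordinal 6 2 isT)); rewrite /cyc_edge /= n3 => -[] l2.
move: (hl (@Ordinal 6 4 isT)); rewrite /cyc_edge /= n5 => -[] l4.
move: (hl (@Ordinal 6 1 isT)); rewrite /cyc_edge /= n2.
case: ifP => [/andP[a1 _]|] //= [] l1.
move: (hl (@Ordinal 6 3 isT)); rewrite /cyc_edge /= n4.
case: ifP => [/andP[a3 _]|] //= [] l3.
move: (hl (@Ordinal 6 5 isT)); rewrite /cyc_edge /= n6.
case: ifP => [/andP[a5 _]|] //= [] l5.
rewrite big_mkcond prod6 /= [RHS]big_mkcond prod6 /= !mulr1 !mul1r -l0 -l1 -l2 -l3 -l4 -l5 in heq.
rewrite !(xabs HA HB) -[X in X <= _](ger0_norm (ltW hpos)) !normrM.
rewrite le_eqVlt; apply/orP; left; apply/eqP.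
transitivity ((`|A p u| * `|A q v| * `|A r w|) * (`|B v p| * `|B w q| * `|B u r|)); first ring.
by rewrite heq; ring.
Qed.

Lemma L6 (R : realType) m (C A : 'M[R]_(m,3)) (B : 'M[R]_(3,m)) :
  in_Q0 C A -> in_Q0 C B^T ->
  (forall c : 'I_4 -> dsr_vertex m 3, e_cycle A B c -> s_cycle A B c) ->
  (forall c : 'I_6 -> dsr_vertex m 3, o_cycle A B c -> s_cycle A B c) ->
  forall p q r u v w, u != v -> v != w -> u != w ->
  T6 A B p q r u v w <= X6 A B p q r u v w.
Proof.
move=> HA HB H4 H6 p q r u v w uv vw uw.
have X0 := xpos HA HB.
have L := L4 HA HB H4.
case: (eqVneq p q) => [<-|pq].
  rewrite (_ : T6 A B p p r u v w = xx A B p v * (A p u * A r w * B w p * B u r)); last by rewrite /T6 /xx; ring.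
  rewrite (_ : X6 A B p p r u v w = xx A B p v * (xx A B p w * xx A B r u)); last by rewrite /X6; ring.
  by apply: ler_wpM2l => //; apply: L.
case: (eqVneq q r) => [<-|qr].
  rewrite (_ : T6 A B p q q u v w = xx A B q w * (A p u * A q v * B v p * B u q)); last by rewrite /T6 /xx; ring.
  rewrite (_ : X6 A B p q q u v w = xx A B q w * (xx A B p v * xx A B q u)); last by rewrite /X6; ring.
  by apply: ler_wpM2l => //; apply: L.
case: (eqVneq p r) => [<-|pr].
  rewrite (_ : T6 A B p q p u v w = xx A B p u * (A q v * A p w * B w q * B v p)); last by rewrite /T6 /xx; ring.
  rewrite (_ : X6 A B p q p u v w = xx A B p u * (xx A B q w * xx A B p v)); last by rewrite /X6; ring.
  by apply: ler_wpM2l => //; apply: L.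
exact: (L6d HA HB H6).
Qed.

Definition MM (R : comNzRingType) m (A : 'M[R]_(m,3)) (B : 'M[R]_(3,m)) p q u v :=
  (A p u * A q v - A p v * A q u) * (B u p * B v q - B v p * B u q).

Lemma MM_ge0 (R : realType) m (C A : 'M[R]_(m,3)) (B : 'M[R]_(3,m)) :
  in_Q0 C A -> in_Q0 C B^T ->
  (forall c : 'I_4 -> dsr_vertex m 3, e_cycle A B c -> s_cycle A B c) ->
  forall p q u v, u != v -> 0 <= MM A B p q u v.
Proof.
move=> HA HB H4 p q u v uv; have vu : v != u by rewrite eq_sym.
have h1 := L4 HA HB H4 p q uv.
have h2 := L4 HA HB H4 p q vu.
rewrite (_ : MM A B p q u v = (xx A B p v * xx A B q u - A p u * A q v * B v p * B u q)
   + (xx A B p u * xx A B q v - A p v * A q u * B u p * B v q)); last by rewrite /MM /xx; ring.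
by apply: addr_ge0; rewrite subr_ge0.
Qed.
Definition G3 (R : comNzRingType) (X Y Z : 'M[R]_3) : R :=
  let k00 := X o1 o1 + X o2 o2 in let k01 := - X o0 o1 in let k02 := - X o0 o2 in
  let k10 := - Y o1 o0 in let k11 := Y o0 o0 + Y o2 o2 in let k12 := - Y o1 o2 in
  let k20 := - Z o2 o0 in let k21 := - Z o2 o1 in let k22 := Z o0 o0 + Z o1 o1 in
  k00 * (k11 * k22 - k12 * k21) - k01 * (k10 * k22 - k12 * k20) + k02 * (k10 * k21 - k11 * k20).

Definition Gs (R : comNzRingType) (X Y Z : 'M[R]_3) : R :=
  G3 X Y Z + G3 X Z Y + G3 Y X Z + G3 Y Z X + G3 Z X Y + G3 Z Y X.

Definition Nm (R : comNzRingType) m (A : 'M[R]_(m,3)) (B : 'M[R]_(3,m)) (i : 'I_m) : 'M[R]_3 :=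
  \matrix_(j, k) (B j i * A i k).

Lemma Gs_ident (R : comNzRingType) m (A : 'M[R]_(m,3)) (B : 'M[R]_(3,m)) i1 i2 i3 :
  Gs (Nm A B i1) (Nm A B i2) (Nm A B i3) =
  xx A B i1 o0 * MM A B i2 i3 o0 o1 + xx A B i1 o0 * MM A B i2 i3 o0 o2 + xx A B i1 o1 * MM A B i2 i3 o1 o0 + xx A B i1 o1 * MM A B i2 i3 o1 o2 + xx A B i1 o2 * MM A B i2 i3 o2 o0 + xx A B i1 o2 * MM A B i2 i3 o2 o1 + xx A B i2 o0 * MM A B i1 i3 o0 o1 + xx A B i2 o0 * MM A B i1 i3 o0 o2 + xx A B i2 o1 * MM A B i1 i3 o1 o0 + xx A B i2 o1 * MM A B i1 i3 o1 o2 + xx A B i2 o2 * MM A B i1 i3 o2 o0 + xx A B i2 o2 * MM A B i1 i3 o2 o1 + xx A B i3 o0 * MM A B i1 i2 o0 o1 + xx A B i3 o0 * MM A B i1 i2 o0 o2 + xx A B i3 o1 * MM A B i1 i2 o1 o0 + xx A B i3 o1 * MM A B i1 i2 o1 o2 + xx A B i3 o2 * MM A B i1 i2 o2 o0 + xx A B i3 o2 * MM A B i1 i2 o2 o1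
 + ((X6 A B i1 i2 i3 o0 o1 o2 - T6 A B i1 i2 i3 o0 o1 o2) + (X6 A B i1 i3 i2 o0 o2 o1 - T6 A B i1 i3 i2 o0 o2 o1) + (X6 A B i1 i2 i3 o0 o2 o1 - T6 A B i1 i2 i3 o0 o2 o1) + (X6 A B i1 i3 i2 o0 o1 o2 - T6 A B i1 i3 i2 o0 o1 o2) + (X6 A B i1 i2 i3 o1 o0 o2 - T6 A B i1 i2 i3 o1 o0 o2) + (X6 A B i1 i3 i2 o1 o2 o0 - T6 A B i1 i3 i2 o1 o2 o0) + (X6 A B i1 i2 i3 o1 o2 o0 - T6 A B i1 i2 i3 o1 o2 o0) + (X6 A B i1 i3 i2 o1 o0 o2 - T6 A B i1 i3 i2 o1 o0 o2) + (X6 A B i1 i2 i3 o2 o0 o1 - T6 A B i1 i2 i3 o2 o0 o1) + (X6 A B i1 i3 i2 o2 o1 o0 - T6 A B i1 i3 i2 o2 o1 o0) + (X6 A B i1 i2 i3 o2 o1 o0 - T6 A B i1 i2 i3 o2 o1 o0) + (X6 A B i1 i3 i2 o2 o0 o1 - T6 A B i1 i3 i2 o2 o0 o1)).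
Proof.
rewrite /Gs /G3 /Nm /MM /T6 /X6 /xx /= !mxE. ring.
Qed.

Lemma Gs_loc_ge0 (R : realType) m (C A : 'M[R]_(m,3)) (B : 'M[R]_(3,m)) :
  in_Q0 C A -> in_Q0 C B^T ->
  (forall c : 'I_4 -> dsr_vertex m 3, e_cycle A B c -> s_cycle A B c) ->
  (forall c : 'I_6 -> dsr_vertex m 3, o_cycle A B c -> s_cycle A B c) ->
  forall i1 i2 i3, 0 <= Gs (Nm A B i1) (Nm A B i2) (Nm A B i3).
Proof.
move=> HA HB H4 H6 i1 i2 i3.
have X0 := xpos HA HB.
have M0 := MM_ge0 HA HB H4.
have L := L6 HA HB H4 H6.
rewrite Gs_ident.
repeat match goal with
 | |- is_true (Order.le _ (GRing.add (X6 _ _ _ _ _ _ _ _) (GRing.opp (T6 _ _ _ _ _ _ _ _)))) =>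
     rewrite subr_ge0; apply: L; by []
 | |- is_true (Order.le _ (GRing.mul (xx _ _ _ _) (MM _ _ _ _ _ _))) =>
     apply: mulr_ge0; [exact: X0 | apply: M0; by []]
 | |- is_true (Order.le _ (GRing.add _ _)) => apply: addr_ge0
 end.
Qed.

Lemma GsD (R : comNzRingType) (X X' Y Z : 'M[R]_3) : Gs (X + X') Y Z = Gs X Y Z + Gs X' Y Z.
Proof. rewrite /Gs /G3 /= !mxE. ring. Qed.

Lemma Gs0 (R : comNzRingType) (Y Z : 'M[R]_3) : Gs 0 Y Z = 0.
Proof. rewrite /Gs /G3 /= !mxE. ring. Qed.

Lemma GsC12 (R : comNzRingType) (X Y Z : 'M[R]_3) : Gs X Y Z = Gs Y X Z.
Proof. rewrite /Gs. ring. Qed.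

Lemma GsC13 (R : comNzRingType) (X Y Z : 'M[R]_3) : Gs X Y Z = Gs Z Y X.
Proof. rewrite /Gs. ring. Qed.

Lemma Gs_sum (R : comNzRingType) m (F : 'I_m -> 'M[R]_3) (Y Z : 'M[R]_3) :
  Gs (\sum_i F i) Y Z = \sum_i Gs (F i) Y Z.
Proof.
apply: (big_morph (fun X => Gs X Y Z) (id1 := 0) (op1 := +%R)).
  by move=> X X'; apply: GsD.
exact: Gs0.
Qed.

Lemma BA_sum (R : comNzRingType) m (A : 'M[R]_(m,3)) (B : 'M[R]_(3,m)) :
  B *m A = \sum_i Nm A B i.
Proof.
apply/matrixP => j k; rewrite !mxE summxE; apply: eq_bigr => i _; by rewrite mxE.
Qed.

Lemma Gs_BA_ge0 (R : realType) m (C A : 'M[R]_(m,3)) (B : 'M[R]_(3,m)) :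
  in_Q0 C A -> in_Q0 C B^T ->
  (forall c : 'I_4 -> dsr_vertex m 3, e_cycle A B c -> s_cycle A B c) ->
  (forall c : 'I_6 -> dsr_vertex m 3, o_cycle A B c -> s_cycle A B c) ->
  0 <= Gs (B *m A) (B *m A) (B *m A).
Proof.
move=> HA HB H4 H6.
have P := Gs_loc_ge0 HA HB H4 H6.
rewrite BA_sum Gs_sum; apply: sumr_ge0 => i _.
rewrite GsC12 Gs_sum; apply: sumr_ge0 => j _.
rewrite GsC13 Gs_sum; apply: sumr_ge0 => k _.
exact: P.
Qed.

Definition ca1 (R : comNzRingType) (M : 'M[R]_3) := M o0 o0 + M o1 o1 + M o2 o2.
Definition ca2 (R : comNzRingType) (M : 'M[R]_3) :=
  M o0 o0 * M o1 o1 - M o0 o1 * M o1 o0 + M o0 o0 * M o2 o2 - M o0 o2 * M o2 o0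
  + M o1 o1 * M o2 o2 - M o1 o2 * M o2 o1.
Definition ca3 (R : comNzRingType) (M : 'M[R]_3) :=
  M o0 o0 * (M o1 o1 * M o2 o2 - M o1 o2 * M o2 o1)
         - M o0 o1 * (M o1 o0 * M o2 o2 - M o1 o2 * M o2 o0)
         + M o0 o2 * (M o1 o0 * M o2 o1 - M o1 o1 * M o2 o0).

Lemma Gs_char (R : comNzRingType) (M : 'M[R]_3) :
  Gs M M M = 6 * (ca1 M * ca2 M - ca3 M).
Proof. rewrite /Gs /G3 /ca1 /ca2 /ca3 /=. ring. Qed.

Lemma char_cubic (R : rcfType) (M : 'M[R]_3) (l : R[i]) :
  \det (map_mx (real_complex R) M - l%:M) = 0 ->
  l^+3 - ((ca1 M)%:C)%C * l^+2 + ((ca2 M)%:C)%C * l - ((ca3 M)%:C)%C = 0.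
Proof.
rewrite det33 !mxE /= => h.
rewrite -[RHS]oppr0 -[X in _ = - X]h /ca1 /ca2 /ca3 !(rmorphB, rmorphD, rmorphM).
rewrite /= ?mulr0n ?mulr1n.
ring.
Qed.

Theorem corollary6p1 (R : realType) (m : nat) (C : 'M[R]_(m, 3))
    (A : 'M[R]_(m, 3)) (B : 'M[R]_(3, m)) :
  (0 < m)%N ->
  in_Q0 C A -> in_Q0 C B^T ->
  (forall c : 'I_4 -> dsr_vertex m 3, e_cycle A B c -> s_cycle A B c) ->
  (forall c : 'I_6 -> dsr_vertex m 3, o_cycle A B c -> s_cycle A B c) ->
  forall lambda : R[i],
    eigenvalue (map_mx (real_complex R) (A *m B)) lambda ->
    @complex.Im R lambda != 0 -> ~ (@complex.Re R lambda < 0).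
Proof.
move=> _ HA HB H4 H6 l hl hIm hRe.
have l0 : l != 0 by apply: contraNneq hIm => ->.
rewrite map_mxM in hl.
have hdet := eig_swap hl l0.
rewrite -map_mxM in hdet.
have cub := char_cubic hdet.
have hG := Gs_BA_ge0 HA HB H4 H6.
rewrite Gs_char in hG.
have hD : 0 <= ca1 (B *m A) * ca2 (B *m A) - ca3 (B *m A).
  by rewrite -(pmulr_rge0 _ (ltr0n _ 6)).
have := cubic_re cub hIm hD.
by rewrite leNgt hRe.
Qed.
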